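(* Assume $r=1$, $\gamma\neq 0$, $o(s)=n<\infty$, and that the polynomial $\psi$ is a nonzero constant $C$ (equivalently $\phi=(s-1)C$). If $M$ is a simple $L$-module on which $H^n$ acts as the scalar $C^n$, then $\operatorname{ann}M$ contains $u^n$ or $d^n$.
   Context: Let $s,\gamma\in\mathbb C$, $s\neq0$, $\gamma\neq 0$, $\phi\in\mathbb C[x]$, and let $L=L(\phi,1,s,\gamma)$ be the associative $\mathbb C$-algebra generated by $u,d,h$ subject to $hu-uh=\gamma u$, $dh-hd=\gamma d$, $du-sud=\phi(h)$. Fix $\psi\in\mathbb C[x]$ with $s\psi(x)-\psi(x+\gamma)=\phi(x)$ (such $\psi$ exists) and set $H=ud+\psi(h)\in L$; then $Hu=suH$ and $dH=sHd$. For $z\in\mathbb C^\times$, $o(z)$ denotes its multiplicative order. Modules are left modules. *)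

(* Defs.v *)
From HB Require Import structures.
From mathcomp Require Import all_boot all_order all_algebra.
Set Implicit Arguments. Unset Strict Implicit. Unset Printing Implicit Defensive.
Import Order.TTheory GRing.Theory Num.Theory.
Local Open Scope ring_scope.

Section LDefs.
Variables (F : fieldType) (V : lmodType F).

Definition peval (p : {poly F}) (f : V -> V) (v : V) : V :=
  \sum_(i < size p) p`_i *: iter i f v.

(* (U, D, Hh) are the actions of u, d, h defining a left module over
   L = L(phi, 1, s, gamma):  hu - uh = gamma u, dh - hd = gamma d,
   du - s ud = phi(h). *)
Definition is_L_module (phi : {poly F}) (s gamma : F) (U D Hh : V -> V) : Prop :=
  forall v : V,
    [/\ Hh (U v) - U (Hh v) = gamma *: U v,
        D (Hh v) - Hh (D v) = gamma *: D v &
        D (U v) - s *: U (D v) = peval phi Hh v].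

Definition L_simple (U D Hh : V -> V) : Prop :=
  (exists v : V, v != 0) /\
  forall S : V -> Prop,
    S 0 ->
    (forall a x y, S x -> S y -> S (a *: x + y)) ->
    (forall x, S x -> S (U x)) ->
    (forall x, S x -> S (D x)) ->
    (forall x, S x -> S (Hh x)) ->
    (forall x, S x -> x = 0) \/ (forall x, S x).

Definition H_act (psi : {poly F}) (U D Hh : V -> V) (v : V) : V :=
  U (D v) + peval psi Hh v.

End LDefs.

(* Main.v *)
Require Import Defs.
From HB Require Import structures.
From mathcomp Require Import all_boot all_order all_algebra.
Import GRing.Theory.
Local Open Scope ring_scope.

Section Peval.
Variables (F : fieldType) (V : lmodType F) (f : {linear V -> V}).

Lemma iter_lin k a x y : iter k f (a *: x + y) = a *: iter k f x + iter k f y.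
Proof. by elim: k => //= k ->; rewrite linearD linearZ. Qed.
Lemma iter_0 k : iter k f 0 = 0.
Proof. by elim: k => //= k ->; rewrite linear0. Qed.
Lemma iter_add k x y : iter k f (x + y) = iter k f x + iter k f y.
Proof. by have := iter_lin k 1 x y; rewrite !scale1r. Qed.
Lemma iter_scale k a x : iter k f (a *: x) = a *: iter k f x.
Proof. by have := iter_lin k a x 0; rewrite !addr0 iter_0 addr0. Qed.
Lemma iter_sub k x y : iter k f (x - y) = iter k f x - iter k f y.
Proof. by rewrite -scaleN1r iter_add iter_scale scaleN1r. Qed.
Lemma iter_comm k x : iter k f (f x) = f (iter k f x).
Proof. by rewrite -iterSr. Qed.

Lemma pevalE N (p : {poly F}) v : (size p <= N)%N ->
  peval p f v = \sum_(i < N) p`_i *: iter i f v.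
Proof.
move=> hN; rewrite /peval (big_ord_widen N (fun i => p`_i *: iter i f v)) //.
rewrite big_mkcond; apply: eq_bigr => i _; case: ifP => // /negbT.
by rewrite -leqNgt => H; rewrite nth_default ?scale0r.
Qed.

Lemma peval_MXaddC (p : {poly F}) c v : peval (p * 'X + c%:P) f v = peval p f (f v) + c *: v.
Proof.
rewrite (@pevalE (size p).+1); last by rewrite size_MXaddC; case: ifP.
rewrite big_ord_recl /= coefD coefMX coefC /= add0r addrC; congr (_ + _).
apply: eq_bigr => i _; rewrite coefD coefMX coefC /= addr0.
by rewrite /bump /= -iterSr.
Qed.

Lemma peval_MX (p : {poly F}) v : peval (p * 'X) f v = peval p f (f v).
Proof. by have := peval_MXaddC p 0 v; rewrite polyC0 addr0 scale0r addr0. Qed.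

Lemma pevalC (c : F) v : peval c%:P f v = c *: v.
Proof.
rewrite (@pevalE 1) ?size_polyC_leq1 // big_ord1 coefC /=. by [].
Qed.

Lemma peval0 v : peval 0 f v = 0.
Proof. by rewrite -polyC0 pevalC scale0r. Qed.

Lemma peval_add (p q : {poly F}) v : peval (p + q) f v = peval p f v + peval q f v.
Proof.
rewrite !(@pevalE (maxn (size p) (size q))) ?size_polyD ?leq_maxl ?leq_maxr //.
by rewrite -big_split; apply: eq_bigr => i _; rewrite coefD scalerDl.
Qed.

Lemma peval_scale a (p : {poly F}) v : peval (a *: p) f v = a *: peval p f v.
Proof.
rewrite !(@pevalE (size p)) ?size_scale_leq // scaler_sumr.
by apply: eq_bigr => i _; rewrite coefZ scalerA.
Qed.

Lemma peval_lin (p : {poly F}) a x y : peval p f (a *: x + y) = a *: peval p f x + peval p f y.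
Proof.
rewrite /peval scaler_sumr -big_split; apply: eq_bigr => i _.
by rewrite iter_lin scalerDr !scalerA mulrC.
Qed.

Lemma peval_commf (p : {poly F}) v : peval p f (f v) = f (peval p f v).
Proof.
rewrite /peval linear_sum; apply: eq_bigr => i _.
by rewrite linearZ iter_comm.
Qed.

Lemma peval_mul (p q : {poly F}) v : peval (p * q) f v = peval p f (peval q f v).
Proof.
elim/poly_ind: p q v => [|p c IH] q v; first by rewrite mul0r !peval0.
rewrite mulrDl -mulrA (mulrC 'X) mulrA peval_add peval_MX IH mul_polyC.
by rewrite peval_scale peval_MXaddC peval_commf.
Qed.

Lemma peval_Xn k v : peval ('X^k) f v = iter k f v.
Proof.
elim: k v => [|k IH] v; first by rewrite expr0 pevalC scale1r.
by rewrite exprSr peval_MX IH iterSr.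
Qed.

Lemma peval_XsubC (c : F) v : peval ('X - c%:P) f v = f v - c *: v.
Proof.
by rewrite -polyCN peval_add pevalC -(expr1 'X) peval_Xn scaleNr.
Qed.

Lemma peval_prod_inj (r : seq nat) (g : nat -> F) :
  (forall i, i \in r -> forall x, f x - g i *: x = 0 -> x = 0) ->
  forall x, peval (\prod_(i <- r) ('X - (g i)%:P)) f x = 0 -> x = 0.
Proof.
elim: r => [|i r IH] hinj x; first by rewrite big_nil pevalC scale1r.
rewrite big_cons peval_mul peval_XsubC => /(hinj i (mem_head _ _)) /IH; apply.
by move=> j jr; apply: hinj; rewrite inE jr orbT.
Qed.

End Peval.

Section Ops.
Variables (F : fieldType) (V : lmodType F) (U D : {linear V -> V}) (c k : F).
Definition Tf (v : V) : V := k *: (U (D v) + c *: v).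
Fact Tf_lin : linear Tf.
Proof.
move=> a x y; rewrite /Tf !linearP /= !scalerDr !scalerA.
rewrite (mulrC k a) mulrA (mulrC k a) mulrA.
by rewrite addrACA.
Qed.
HB.instance Definition _ := GRing.isLinear.Build F V V *:%R Tf Tf_lin.
End Ops.
Arguments Tf {F V}.

Section Rel.
Variables (F : fieldType) (s gamma C : F) (V : lmodType F) (U D Hh : {linear V -> V}).
Hypothesis R1 : forall v, Hh (U v) - U (Hh v) = gamma *: U v.
Hypothesis R2 : forall v, D (Hh v) - Hh (D v) = gamma *: D v.
Hypothesis R3 : forall v, D (U v) - s *: U (D v) = (s * C - C) *: v.
Let Hf v := U (D v) + C *: v.

Lemma DU v : D (U v) = s *: Hf v - C *: v.
Proof.
move/eqP: (R3 v); rewrite subr_eq => /eqP ->.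
by rewrite /Hf scalerDr scalerA scalerBl addrC addrA.
Qed.

Lemma HU v : Hf (U v) = s *: U (Hf v).
Proof.
rewrite /Hf DU !linearP /= linearD /= !linearZ /= scalerDr scalerA.
by rewrite linearN scalerN subrK.
Qed.

Lemma DH v : D (Hf v) = s *: Hf (D v).
Proof. by rewrite /Hf linearD linearZ /= DU subrK. Qed.

Lemma iterU_H j v : Hf (iter j U v) = s ^+ j *: iter j U (Hf v).
Proof.
elim: j v => [|j IH] v; first by rewrite scale1r.
by rewrite iterS HU IH linearZ /= scalerA -exprS.
Qed.

Lemma iterD_H j v : iter j D (Hf v) = s ^+ j *: Hf (iter j D v).
Proof.
elim: j v => [|j IH] v; first by rewrite scale1r.
by rewrite iterSr DH iter_scale IH scalerA -exprS -iterSr.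
Qed.

Lemma iterU_Hh j v : iter j U (Hh v) = Hh (iter j U v) - (j%:R * gamma) *: iter j U v.
Proof.
elim: j v => [|j IH] v; first by rewrite mul0r scale0r subr0.
have E w : U (Hh w) = Hh (U w) - gamma *: U w.
  by rewrite -(R1 w) opprB addrC subrK.
rewrite iterS IH linearB linearZ /= E -addrA -opprD -scalerDl.
congr (_ - _ *: _).
by rewrite -[j.+1]addn1 natrD mulrDl mul1r addrC.
Qed.

Lemma iterD_Hh j v : iter j D (Hh v) = Hh (iter j D v) + (j%:R * gamma) *: iter j D v.
Proof.
elim: j v => [|j IH] v; first by rewrite mul0r scale0r addr0.
have E w : D (Hh w) = Hh (D w) + gamma *: D w.
  by rewrite -(R2 w) addrC subrK.
rewrite iterS IH linearD linearZ /= E -addrA -scalerDl.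
congr (_ + _ *: _).
by rewrite -[j.+1]addn1 natrD mulrDl mul1r addrC.
Qed.

Lemma UnD m v : s ^+ m.+1 = 1 -> iter m.+1 U (D v) = D (iter m.+1 U v).
Proof.
move=> hsn.
rewrite [in RHS]iterS DU iterU_H scalerA -exprS hsn scale1r -iter_scale -iter_sub.
by rewrite /Hf addrK -iterSr.
Qed.

Lemma DnU m v : s ^+ m.+1 = 1 -> iter m.+1 D (U v) = U (iter m.+1 D v).
Proof.
move=> hsn.
rewrite iterSr DU iter_sub !iter_scale iterD_H scalerA -exprS hsn scale1r.
by rewrite /Hf addrK -iterS.
Qed.

Lemma inj_chain : (forall x, U x = 0 -> x = 0) -> (forall x, D x = 0 -> x = 0) ->
  forall j x, s ^+ j.+1 *: Hf x - C *: x = 0 -> x = 0.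
Proof.
move=> iU iD; elim=> [|j IH] x.
  by rewrite expr1 -DU => /iD /iU.
move=> h; apply: iU; apply: IH.
rewrite HU scalerA -exprSr.
have -> : s ^+ j.+2 *: U (Hf x) - C *: U x = U (s ^+ j.+2 *: Hf x - C *: x).
  by rewrite linearB /= !linearZ.
by rewrite h linear0.
Qed.
End Rel.

Lemma iter_Tf (F : fieldType) (V : lmodType F) (U D : {linear V -> V}) (c a : F) k x :
  iter k (Tf U D c a) x = a ^+ k *: iter k (Tf U D c 1) x.
Proof.
elim: k => [|k IH]; first by rewrite scale1r.
rewrite !iterS IH.
have -> : Tf U D c a (a ^+ k *: iter k (Tf U D c 1) x) =
          a *: Tf U D c 1 (a ^+ k *: iter k (Tf U D c 1) x).
  by rewrite /Tf scale1r.
by rewrite [X in a *: X = _]linearZ scalerA -exprS.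
Qed.

Theorem mainTheorem7 (F : fieldType) (s gamma C : F) (n : nat)
    (phi psi : {poly F})
    (hs : s != 0) (hgamma : gamma != 0)
    (hord : n.-primitive_root s)
    (hpsi_eq : s *: psi - (psi \Po ('X + gamma%:P)) = phi)
    (hpsiC : psi = C%:P) (hC : C != 0)
    (V : lmodType F) (U D Hh : {linear V -> V})
    (hmod : is_L_module phi s gamma U D Hh)
    (hsimple : L_simple U D Hh)
    (hHn : forall v : V, iter n (H_act psi U D Hh) v = C ^+ n *: v) :
  (forall v : V, iter n U v = 0) \/ (forall v : V, iter n D v = 0).
Proof.
have hphi : phi = (s * C - C)%:P.
  by rewrite -hpsi_eq hpsiC comp_polyC scale_polyC polyCB.
have R1 v : Hh (U v) - U (Hh v) = gamma *: U v by case: (hmod v).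
have R2 v : D (Hh v) - Hh (D v) = gamma *: D v by case: (hmod v).
have R3 v : D (U v) - s *: U (D v) = (s * C - C) *: v.
  by case: (hmod v) => _ _ ->; rewrite hphi pevalC.
have hH v : H_act psi U D Hh v = Tf U D C 1 v.
  by rewrite /H_act /Tf hpsiC pevalC scale1r.
have hn := prim_order_gt0 hord.
have hsn := prim_expr_order hord.
move: hord hHn hn hsn; case: n => [|m] // hord hHn _ hsn.
have [[v0 nz_v0] simp] := hsimple.
case: (simp (fun x => iter m.+1 U x = 0)).
- exact: iter_0.
- by move=> a x y hx hy; rewrite iter_lin hx hy scaler0 addr0.
- by move=> x hx; rewrite iter_comm hx linear0.
- by move=> x hx; rewrite (@UnD _ _ _ _ _ _ R3) // hx linear0.
- by move=> x hx; rewrite (@iterU_Hh _ _ _ _ _ R1) hx linear0 scaler0 subr0.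
- move=> injU; case: (simp (fun x => iter m.+1 D x = 0)).
  + exact: iter_0.
  + by move=> a x y hx hy; rewrite iter_lin hx hy scaler0 addr0.
  + by move=> x hx; rewrite (@DnU _ _ _ _ _ _ R3) // hx linear0.
  + by move=> x hx; rewrite iter_comm hx linear0.
  + by move=> x hx; rewrite (@iterD_Hh _ _ _ _ _ R2) hx linear0 scaler0 addr0.
  + move=> injD.
    have iU x : U x = 0 -> x = 0.
      by move=> hx; apply: injU; rewrite iterSr hx iter_0.
    have iD x : D x = 0 -> x = 0.
      by move=> hx; apply: injD; rewrite iterSr hx iter_0.
    pose T := Tf U D C C^-1.
    have hT x : iter m.+1 T x = x.
      rewrite /T iter_Tf -(eq_iter hH) hHn scalerA -exprMn mulVf // expr1n scale1r //.
    have heig i x : (i < m.+1)%N -> T x - s ^+ i *: x = 0 -> x = 0.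
      move=> hi h; apply: (@inj_chain _ _ _ _ _ _ R3 iU iD (m - i)).
      have e : s ^+ (m - i).+1 * s ^+ i = 1 by rewrite -exprD addSn subnK // -ltnS.
      have -> : s ^+ (m - i).+1 *: (U (D x) + C *: x) - C *: x =
        (s ^+ (m - i).+1 * C) *: (C^-1 *: (U (D x) + C *: x) - s ^+ i *: x).
        by rewrite scalerBr !scalerA -mulrA mulfV // mulr1 mulrAC e mul1r.
      by move: h; rewrite /T /Tf => ->; rewrite scaler0.
    have hall (x : V) : x = 0.
      have P := @peval_prod_inj _ _ (Tf U D C C^-1 : {linear V -> V}) (index_iota 0 m.+1) (fun i => s ^+ i).
      apply: P.
      - by move=> i; rewrite mem_index_iota => /andP [_ hi] y; exact: heig.
      - rewrite (factor_Xn_sub_1 hord).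
        have -> : ('X^(m.+1) - 1 : {poly F}) = 'X^(m.+1) + (-1)%:P by rewrite polyCN polyC1.
        by rewrite peval_add peval_Xn pevalC hT scaleN1r subrr.
    by move: nz_v0; rewrite (hall v0) eqxx.
  + by right.
- by left.
Qed.
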